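(* Let $k\in\mathbb{Z}$ and $\imath\in\mathbb{Z}_{>1}$. The rational polygon $\mathrm{conv}((0,0),(k,\imath),(k+2/5,\imath))$ is canonical if and only if the rational polygon $\mathrm{conv}((0,0),(k,\imath),(k+1/3,\imath))$ is canonical.
   Context: For rationals $a<b$ and $\imath\in\mathbb{Z}_{>1}$, the polygon $\mathrm{conv}((0,0),(a,\imath),(b,\imath))$ is called canonical if every lattice point $p\neq(0,0)$ in it satisfies $p_2=\imath$. *)

(* Defs.v *)
From HB Require Import structures.
From mathcomp Require Import all_boot all_order all_algebra.
Set Implicit Arguments. Unset Strict Implicit. Unset Printing Implicit Defensive.
Import Order.TTheory GRing.Theory Num.Theory.
Local Open Scope ring_scope.

Definition in_conv3 (P0 P1 P2 p : rat * rat) : Prop :=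
  exists l0 l1 l2 : rat,
    0 <= l0 /\ 0 <= l1 /\ 0 <= l2 /\ l0 + l1 + l2 = 1 /\
    p.1 = l0 * P0.1 + l1 * P1.1 + l2 * P2.1 /\
    p.2 = l0 * P0.2 + l1 * P1.2 + l2 * P2.2.

Definition canonical (a b : rat) (i : int) : Prop :=
  forall x y : int,
    in_conv3 (0, 0) (a, i%:~R) (b, i%:~R) (x%:~R, y%:~R) ->
    (x, y) <> (0, 0) -> y = i.

(* Main.v *)
Require Import Defs.
From HB Require Import structures.
From mathcomp Require Import all_boot all_order all_algebra.
From mathcomp Require Import zify ring lra.
Import Order.TTheory GRing.Theory Num.Theory.
Local Open Scope ring_scope.



Lemma key (k i : int) : 1 < i ->
  (exists x y : int, [/\ 0 < y, y < i, 0 <= x*i - k*y & 5*(x*i-k*y) <= 2*y]) ->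
  exists x y : int, [/\ 0 < y, y < i, 0 <= x*i - k*y & 3*(x*i-k*y) <= y].
Proof.
move=> hi [x [y [hy0 hyi hr0 hr]]].
have [g1|gn1] := eqVneq (gcdz k i) 1.
- have [u [v huv]] := Bezoutz k i.
  rewrite g1 in huv.
  have hdq := divz_eq (- u) i.
  have hq0 : 0 <= ((- u) %% i)%Z by apply: modz_ge0; lia.
  have hqi : ((- u) %% i)%Z < i.
    have hi0 : i != 0 by lia.
    by have := ltz_mod (- u) hi0; rewrite gtr0_norm //; lia.
  set q := ((- u) %% i)%Z in hdq hq0 hqi *.
  set t := ((- u) %/ i)%Z in hdq.
  have hx0 : (v - k * t) * i - k * q = 1.
    have -> : q = - u - t * i by rewrite hdq; ring.
    rewrite -huv; ring.
  have [hq3|hq3] := lerP 3 q.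
    exists (v - k * t), q; split; lia.
  exfalso.
  have hm : i * (y * (v - k*t) - q * x) = y - q * (x*i - k*y).
    have -> : y - q * (x*i - k*y) = y * ((v - k * t) * i - k * q) - q * (x*i - k*y) by rewrite hx0; ring.
    ring.
  set m := y * (v - k*t) - q * x in hm.
  set r := x * i - k * y in hm hr0 hr.
  have h1 : q * r <= 2 * r by apply: ler_wpM2r; lia.
  have h1' : 0 <= q * r by apply: mulr_ge0.
  have h2 : 0 < i * m by lia.
  have h3 : i * m < i by lia.
  have hi0 : 0 < i by lia.
  have hm0 : 0 < m by rewrite -(pmulr_rgt0 _ hi0).
  have : i <= i * m by rewrite ler_peMr //; lia.
  lia.
- have hg0 : 0 <= gcdz k i by rewrite /gcdz.
  have hgn0 : gcdz k i != 0 by rewrite gcdz_eq0; apply/nandP; right; lia.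
  have hg2 : 2 <= gcdz k i by lia.
  have hk := divzK (dvdz_gcdl k i).
  have hi' := divzK (dvdz_gcdr k i).
  set g := gcdz k i in hg0 hgn0 hg2 hk hi'.
  set k' := (k %/ g)%Z in hk. set i' := (i %/ g)%Z in hi'.
  have hi'0 : 0 < i' by rewrite -(pmulr_lgt0 _ (_ : 0 < g)) ?hi'; lia.
  have E : k' * i - k * i' = 0 by rewrite -hi' -hk; ring.
  exists k', i'; rewrite E; split => //.
  rewrite -hi' -subr_gt0.
  have -> : i' * g - i' = i' * (g - 1) by ring.
  apply: mulr_gt0 => //; lia.
lia. Qed.

Lemma canon_iff (w : rat) (k i : int) : 0 < w -> 1 < i ->
  canonical k%:~R (k%:~R + w) i <->
  (forall x y : int, 0 < y -> y < i -> 0 <= x*i - k*y ->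
      ~ ((x*i - k*y)%:~R <= w * y%:~R)).
Proof.
move=> hw hi; have hI : (0 : rat) < i%:~R by rewrite ltr0z; lia.
split.
- move=> H x y hy hyi hr0 hrw.
  have : y = i; last by lia.
  apply: (H x y); last by move=> [_ hy0]; lia.
  set X := (x%:~R : rat); set Y := (y%:~R : rat); set I := (i%:~R : rat).
  set K := (k%:~R : rat).
  have hY : 0 < Y by rewrite ltr0z.
  have hYI : Y <= I by rewrite ler_int; lia.
  set R := ((x * i - k * y)%:~R : rat) in hrw.
  have hR : R = X * I - K * Y by rewrite /R intrB !intrM.
  have hR0 : 0 <= R by rewrite ler0z.
  have hIw : 0 < I * w by apply: mulr_gt0.
  exists (1 - Y / I), ((w * Y - R) / (I * w)), (R / (I * w)).
  split; [|split; [|split; [|split; [|split]]]] => /=.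
  + (rewrite subr_ge0 ler_pdivrMr // mul1r //).
  + have hh := @mulr_ge0 rat (w*Y-R) ((I*w)^-1). apply: hh; [rewrite subr_ge0; exact: hrw| rewrite invr_ge0; exact: ltW].
  + have hh := @mulr_ge0 rat R ((I*w)^-1); apply: hh => //; rewrite invr_ge0; exact: ltW.
  + (field; apply/andP; split; apply: lt0r_neq0 => //).
  + (rewrite hR; field; apply/andP; split; apply: lt0r_neq0 => //).
  + (field; apply/andP; split; apply: lt0r_neq0 => //).
- move=> H x y [l0 [l1 [l2 [h0 [h1 [h2 [hs [hx hy]]]]]]]] hne /=.
  move: hx hy => /= hx hy.
  rewrite !mulr0 !add0r in hx hy.
  set X := (x%:~R : rat) in hx; set Y := (y%:~R : rat) in hy; set I := (i%:~R : rat) in hy hI.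
  set K := (k%:~R : rat) in hx.
  have hY0 : 0 <= Y.
    rewrite hy; apply: addr_ge0.
    - have hh := @mulr_ge0 rat l1 I; apply: hh => //; exact: ltW.
    - have hh := @mulr_ge0 rat l2 I; apply: hh => //; exact: ltW.
  have hYI : Y <= I.
    rewrite -subr_ge0.
    have hl0 : l0 = 1 - l1 - l2 by rewrite -hs; ring.
    have -> : I - Y = l0 * I by rewrite hy hl0; ring.
    have hh := @mulr_ge0 rat l0 I; apply: hh => //; exact: ltW.
  have hy0 : 0 <= y by rewrite -(ler0z rat).
  have hyi : y <= i by rewrite -(ler_int rat).
  have [y0|yne0] := eqVneq y 0.
    exfalso.
    have hY : (l1 + l2) * I = 0 by rewrite mulrDl -hy /Y y0.
    move/eqP: hY; rewrite mulf_eq0 (negbTE (lt0r_neq0 hI)) orbF => /eqP hl.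
    have hl1 : l1 = 0 by lra.
    have hl2 : l2 = 0 by lra.
    have : X = 0 by rewrite hx hl1 hl2; ring.
    move=> hX0; have hx0 : x = 0 by apply/eqP; rewrite -(eqr_int rat x 0) -/X hX0.
    by apply: hne; rewrite hx0 y0.
  have [//|yne] := eqVneq y i.
  exfalso.
  have hR : ((x * i - k * y)%:~R : rat) = l2 * w * I.
    rewrite intrB !intrM -/X -/Y -/I -/K hx hy; ring.
  apply: (H x y).
  + by lia.
  + by lia.
  + rewrite -(ler0z rat) hR.
    have hh := @mulr_ge0 rat (l2 * w) I; apply: hh; last exact: ltW.
    have hh := @mulr_ge0 rat l2 w; apply: hh => //; exact: ltW.
  + rewrite hR -/Y -subr_ge0.
    have -> : w * Y - l2 * w * I = w * l1 * I by rewrite hy; ring.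
    have hh := @mulr_ge0 rat (w * l1) I; apply: hh; last exact: ltW.
    have hh := @mulr_ge0 rat w l1; apply: hh => //; exact: ltW.
Qed.

Lemma conv25 (r y : int) : ((r%:~R : rat) <= 2%:R / 5%:R * y%:~R) <-> (5 * r <= 2 * y).
Proof.
rewrite -(ler_int rat) !intrM.
have -> : ((5 : int)%:~R : rat) = 5 by [].
have -> : ((2 : int)%:~R : rat) = 2 by [].
split => h; lra.
Qed.

Lemma conv13 (r y : int) : ((r%:~R : rat) <= 1 / 3%:R * y%:~R) <-> (3 * r <= y).
Proof.
rewrite -(ler_int rat) !intrM.
have -> : ((3 : int)%:~R : rat) = 3 by [].
split => h; lra.
Qed.

Theorem mainTheorem12 (k i : int) (hi : 1 < i) :
  canonical (k%:~R) (k%:~R + 2%:R / 5%:R) i <->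
  canonical (k%:~R) (k%:~R + 1 / 3%:R) i.
Proof.
rewrite canon_iff; [|lra|done]. rewrite canon_iff; [|lra|done].
split.
- move=> H x y hy hyi hr0 /conv13 h.
  apply: (H x y hy hyi hr0); apply/conv25; lia.
- move=> H x y hy hyi hr0 /conv25 h.
  have [x' [y' [hy' hyi' hr0' h']]] : exists x y : int, [/\ 0 < y, y < i, 0 <= x*i - k*y & 3*(x*i-k*y) <= y].
    by apply: key => //; exists x, y; split.
  by apply: (H x' y' hy' hyi' hr0'); apply/conv13.
Qed.
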